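(* Let $(\Omega,\Sigma,\mu)$ be a measure space with the direct sum property and $L^0=L^0(\Omega,\Sigma,\mu)$. For every nonzero derivation $\delta:L^0\to L^0$ there exist a sequence $(\lambda_n)_{n=1}^\infty$ in $L^0$ with $|\lambda_n|\le\mathbf 1$ for all $n\in\mathbb N$, and a nonzero idempotent $\pi\in\nabla$, such that $$|\delta(\lambda_n)|\ge n\pi\quad\text{for all } n\in\mathbb N.$$
   Context: $L^0(\Omega,\Sigma,\mu)$ is the algebra of equivalence classes (a.e. equality) of complex measurable functions, with unit $\mathbf 1$ and the usual a.e. order on real-valued elements; $\mu$ has the direct sum property: there is a family $\{\Omega_i\}_{i\in J}\subset\Sigma$, $0<\mu(\Omega_i)<\infty$, such that each $A\in\Sigma$ of finite measure equals $\bigcup_{i\in J_0}(A\cap\Omega_i)\cup B$ with $J_0$ countable and $B$ null. A derivation is a linear map $\delta$ with $\delta(xy)=\delta(x)y+x\delta(y)$. $\nabla=\{\tilde\chi_A:A\in\Sigma\}$ is the set of idempotents of $L^0$ (classes of characteristic functions of measurable sets). *)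

(* Defs.v *)
From HB Require Import structures.
From mathcomp Require Import all_boot all_order all_algebra.
From mathcomp Require Import all_classical all_reals all_analysis.
From mathcomp.real_closed Require Import complex.
Set Implicit Arguments. Unset Strict Implicit. Unset Printing Implicit Defensive.
Import Order.TTheory GRing.Theory Num.Theory.
Local Open Scope classical_set_scope.
Local Open Scope ring_scope.

Definition cmod (R : realType) (z : R[i]) : R :=
  Num.sqrt (complex.Re z ^+ 2 + complex.Im z ^+ 2).

(* complex-valued measurable function: real and imaginary parts are
   Borel measurable (Borel sigma-algebra of C = product of those of R) *)
Definition cmeas d (T : measurableType d) (R : realType) (f : T -> R[i]) :=
  measurable_fun setT (fun x => complex.Re (f x)) /\
  measurable_fun setT (fun x => complex.Im (f x)).

Definition aeeq d (T : measurableType d) (R : realType)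
  (mu : {measure set T -> \bar R}) (f g : T -> R[i]) :=
  {ae mu, forall x, f x = g x}.

Definition direct_sum_property d (T : measurableType d) (R : realType)
  (mu : {measure set T -> \bar R}) :=
  exists (J : Type) (Om : J -> set T),
    (forall i, measurable (Om i) /\ (0 < mu (Om i))%E /\ (mu (Om i) < +oo)%E) /\
    (forall A, measurable A -> (mu A < +oo)%E ->
       exists (J0 : set J) (B : set T),
         countable J0 /\ measurable B /\ mu B = 0%E /\
         A = \bigcup_(i in J0) (A `&` Om i) `|` B).

(* A derivation delta : L^0 -> L^0, represented on measurable representatives:
   it maps measurable functions to measurable functions, is compatible with
   a.e. equality (so it is a well-defined map on equivalence classes), and is
   C-linear and satisfies the Leibniz rule in L^0 (i.e. up to a.e. equality). *)
Definition derivation d (T : measurableType d) (R : realType)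
  (mu : {measure set T -> \bar R}) (delta : (T -> R[i]) -> (T -> R[i])) :=
  [/\ (forall f, cmeas f -> cmeas (delta f)),
      (forall f g, cmeas f -> cmeas g -> aeeq mu f g ->
          aeeq mu (delta f) (delta g)),
      (forall (a b : R[i]) f g, cmeas f -> cmeas g ->
          aeeq mu (delta (fun x => a * f x + b * g x))
                  (fun x => a * delta f x + b * delta g x)) &
      (forall f g, cmeas f -> cmeas g ->
          aeeq mu (delta (fun x => f x * g x))
                  (fun x => delta f x * g x + f x * delta g x))].

Definition nonzero_derivation d (T : measurableType d) (R : realType)
  (mu : {measure set T -> \bar R}) (delta : (T -> R[i]) -> (T -> R[i])) :=
  exists f, cmeas f /\ ~ aeeq mu (delta f) (fun _ => 0).

(* Main.v *)
Require Import Defs.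
From HB Require Import structures.
From mathcomp Require Import all_boot all_order all_algebra.
From mathcomp Require Import all_classical all_reals all_analysis.
From mathcomp.real_closed Require Import complex.
From mathcomp Require Import ring lra.
Set Implicit Arguments. Unset Strict Implicit. Unset Printing Implicit Defensive.
Import Order.TTheory GRing.Theory Num.Theory numFieldNormedType.Exports.
Local Open Scope classical_set_scope.
Local Open Scope ring_scope.
Local Open Scope complex_scope.

Lemma cmodE (R : realType) (z : R[i]) : `|z| = (cmod z)%:C.
Proof. by rewrite normc_def. Qed.

Lemma cmod_ge0 (R : realType) (z : R[i]) : 0 <= cmod z.
Proof. exact: sqrtr_ge0. Qed.

Lemma RC_inj (R : realType) (a b : R) : a%:C = b%:C :> R[i] -> a = b.
Proof. by case. Qed.

Lemma cmodM (R : realType) (z w : R[i]) : cmod (z * w) = cmod z * cmod w.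
Proof. by apply: RC_inj; rewrite -!cmodE normrM !cmodE rmorphM. Qed.

Lemma cmod1 (R : realType) : cmod (1 : R[i]) = 1.
Proof. by apply: RC_inj; rewrite -cmodE normr1. Qed.

Lemma cmodX (R : realType) (z : R[i]) n : cmod (z ^+ n) = cmod z ^+ n.
Proof. by elim: n => [|n IH]; rewrite ?expr0 ?cmod1 // !exprS cmodM IH. Qed.

Lemma ReM (R : realType) (a b : R[i]) :
  complex.Re (a * b) = complex.Re a * complex.Re b - complex.Im a * complex.Im b.
Proof. by case: a; case: b. Qed.
Lemma ImM (R : realType) (a b : R[i]) :
  complex.Im (a * b) = complex.Re a * complex.Im b + complex.Im a * complex.Re b.
Proof. by case: a; case: b. Qed.
Lemma ReD (R : realType) (a b : R[i]) :
  complex.Re (a + b) = complex.Re a + complex.Re b.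
Proof. by case: a; case: b. Qed.
Lemma ImD (R : realType) (a b : R[i]) :
  complex.Im (a + b) = complex.Im a + complex.Im b.
Proof. by case: a; case: b. Qed.

Lemma cmeas_mul d (T : measurableType d) (R : realType) (f g : T -> R[i]) :
  cmeas f -> cmeas g -> cmeas (fun x => f x * g x).
Proof.
move=> [f1 f2] [g1 g2]; split.
  under eq_fun do rewrite ReM.
  by apply: measurable_realfun.measurable_funB; apply: measurable_realfun.measurable_funM.
under eq_fun do rewrite ImM.
by apply: measurable_realfun.measurable_funD; apply: measurable_realfun.measurable_funM.
Qed.

Lemma cmeas_add d (T : measurableType d) (R : realType) (f g : T -> R[i]) :
  cmeas f -> cmeas g -> cmeas (fun x => f x + g x).
Proof.
move=> [f1 f2] [g1 g2]; split.
  by under eq_fun do rewrite ReD; apply: measurable_realfun.measurable_funD.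
by under eq_fun do rewrite ImD; apply: measurable_realfun.measurable_funD.
Qed.

Lemma cmeas_cst d (T : measurableType d) (R : realType) (c : R[i]) :
  cmeas (fun _ : T => c).
Proof. by split; apply: measurable_cst. Qed.

Lemma cmeas_RC d (T : measurableType d) (R : realType) (h : T -> R) :
  measurable_fun setT h -> cmeas (fun x => (h x)%:C).
Proof. by move=> mh; split => //=; apply: measurable_cst. Qed.

Lemma cmeas_X d (T : measurableType d) (R : realType) (f : T -> R[i]) n :
  cmeas f -> cmeas (fun x => f x ^+ n).
Proof.
move=> mf; elim: n => [|n IH].
  by under eq_fun do rewrite expr0; apply: cmeas_cst.
by under eq_fun do rewrite exprSr; apply: cmeas_mul.
Qed.

Lemma cmod_eq0 (R : realType) (z : R[i]) : (cmod z == 0) = (z == 0).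
Proof.
rewrite -[z == 0]normr_eq0 cmodE; apply/eqP/eqP => [->|h]; first by [].
by move: h => /(congr1 (@complex.Re R)).
Qed.

Lemma main_real d (T : measurableType d) (R : realType)
  (mu : {measure set T -> \bar R}) (delta : (T -> R[i]) -> (T -> R[i]))
  (h : T -> R) :
  derivation mu delta -> measurable_fun setT h ->
  ~ aeeq mu (delta (fun x => (h x)%:C)) (fun _ => 0) ->
  exists (lam : nat -> T -> R[i]) (A : set T),
    (forall n, (0 < n)%N ->
       cmeas (lam n) /\ {ae mu, forall x, cmod (lam n x) <= 1}) /\
    measurable A /\ mu A <> 0%E /\
    (forall n, (0 < n)%N ->
       {ae mu, forall x, n%:R * \1_A x <= cmod (delta (lam n) x)}).
Proof.
move=> [dm dae dlin dleib] mh nz0.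
pose u := fun x => (h x)%:C : R[i].
have mu_ : cmeas u by apply: cmeas_RC.
pose one := fun _ : T => 1 : R[i].
have d1 : {ae mu, forall x, delta one x = 0}.
  have := dleib one one (@cmeas_cst _ _ _ _) (@cmeas_cst _ _ _ _).
  have -> : (fun x => one x * one x) = one by apply: funext => x; rewrite mulr1.
  apply: filterS => x; rewrite /one mulr1 mul1r.
  by move/(congr1 (fun y => y - delta one x)); rewrite subrr addrK.
have dupi : {ae mu, forall x, delta (fun x => u x + 'i) x = delta u x}.
  have := dlin 1 'i u one mu_ (@cmeas_cst _ _ _ _).
  have -> : (fun x => 1 * u x + 'i * one x) = (fun x => u x + 'i).
    by apply: funext => x; rewrite mul1r mulr1.
  by move=> H; apply: filterS2 H d1 => x -> ->; rewrite mul1r mulr0 addr0.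
have dumi : {ae mu, forall x, delta (fun x => u x - 'i) x = delta u x}.
  have := dlin 1 (- 'i) u one mu_ (@cmeas_cst _ _ _ _).
  have -> : (fun x => 1 * u x + - 'i * one x) = (fun x => u x - 'i).
    by apply: funext => x; rewrite mul1r mulr1.
  by move=> H; apply: filterS2 H d1 => x -> ->; rewrite mul1r mulr0 addr0.
have nz : forall x, u x + 'i != 0.
  move=> x; apply/eqP => /(congr1 (@complex.Im R)) /= /eqP.
  by rewrite add0r oner_eq0.
pose v := fun x => (u x + 'i)^-1.
have mv : cmeas v.
  have -> : v = fun x => ((h x ^+ 2 + 1)^-1)%:C * (u x - 'i).
    apply: funext => x; apply: (mulfI (nz x)); rewrite /v mulfV ?nz //.
    have hp : h x ^+ 2 + 1 != 0.
      by apply/lt0r_neq0; have := sqr_ge0 (h x); lra.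
    rewrite mulrCA.
    have -> : (u x + 'i) * (u x - 'i) = (h x ^+ 2 + 1)%:C.
      have E (a b : R[i]) : (a + b) * (a - b) = a ^+ 2 - b ^+ 2 by ring.
      by rewrite E sqr_i opprK /u rmorphD rmorphXn rmorph1.
    by rewrite -rmorphM mulVf.
  have m2 : cmeas (fun x => u x - 'i) := cmeas_add mu_ (@cmeas_cst _ _ _ _).
  suff m1 : cmeas (fun x => ((h x ^+ 2 + 1)^-1)%:C) by exact: cmeas_mul m1 m2.
  apply: cmeas_RC.
  have mphi : measurable_fun setT (fun r : R => (r ^+ 2 + 1)^-1).
  apply: measurable_realfun.continuous_measurable_fun => r.
    have c1 : continuous (fun x : R => x ^+ 2 + 1).
      move=> x; have := @continuousD R R^o R (fun x : R => x ^+ 2) (fun=> 1) x.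
      by move=> /(_ (@exprn_continuous R 2 x) (@cst_continuous R R 1 x)).
    apply: (@continuousV _ _ (fun x : R => x ^+ 2 + 1) r _ (c1 r)).
    by apply/lt0r_neq0; have := sqr_ge0 r; lra.
  exact: (measurableT_comp mphi mh).
have mupi : cmeas (fun x => u x + 'i) := cmeas_add mu_ (@cmeas_cst _ _ _ _).
have mumi : cmeas (fun x => u x - 'i) := cmeas_add mu_ (@cmeas_cst _ _ _ _).
have dv : {ae mu, forall x, delta v x = - delta u x * v x ^+ 2}.
  have := dleib _ _ mupi mv.
  have -> : (fun x => (u x + 'i) * v x) = one.
    by apply: funext => x; rewrite /v mulfV ?nz.
  move=> H; apply: filterS3 H d1 dupi => x H d1x E.
  rewrite d1x E in H.
  have E2 : (u x + 'i) * delta v x = - (delta u x * v x).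
    by apply/eqP; rewrite -addr_eq0 addrC H.
  rewrite -[delta v x](mulKf (nz x)) E2 /v.
  by field; rewrite nz.
pose g := fun x => (u x - 'i) * v x.
have mg : cmeas g := cmeas_mul mumi mv.
have dg : {ae mu, forall x, delta g x = 2%:R * 'i * delta u x * v x ^+ 2}.
  have := dleib _ _ mumi mv.
  move=> H; apply: filterS3 H dumi dv => x H E1 E.
  rewrite /g H E1 E /v.
  by field; rewrite nz.
have cg1 : forall x, cmod (g x) = 1.
  move=> x; rewrite /g cmodM.
  have -> : cmod (u x - 'i) = cmod (u x + 'i).
    by rewrite /cmod /u /= subr0 addr0 sub0r add0r sqrrN.
  have nc : cmod (u x + 'i) != 0 by rewrite cmod_eq0 nz.
  have -> : cmod (v x) = (cmod (u x + 'i))^-1.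
    apply: (mulfI nc); rewrite -cmodM /v mulfV ?nz // mulfV //.
    exact: cmod1.
  by rewrite mulfV.
pose G := fun m x => g x ^+ m.
have mG : forall m, cmeas (G m) by move=> m; exact: cmeas_X.
have dG : forall m, {ae mu, forall x,
    delta (G m.+1) x = m.+1%:R * g x ^+ m * delta g x}.
  elim=> [|m IH].
    have -> : G 1%N = g by apply: funext => x; rewrite /G expr1.
    by apply: aeW => x; rewrite expr0 mulr1 mul1r.
  have -> : G m.+2 = fun x => G m.+1 x * g x.
    by apply: funext => x; rewrite /G exprSr.
  have := dleib _ _ (mG m.+1) mg.
  move=> H; apply: filterS2 H IH => x H E; rewrite H E /G.
  rewrite -[m.+2]addn1 natrD exprSr; ring.
have ndg : ~ {ae mu, forall x, delta g x = 0}.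
  move=> H0; apply: nz0; rewrite /aeeq.
  apply: filterS2 H0 dg => x E1 E2; move: E1; rewrite E2.
  move/eqP; rewrite !mulf_eq0 /v invr_eq0 (negbTE (nz x)) !orbF.
  have two0 : (2%:R : R[i]) != 0 by rewrite pnatr_eq0.
  have i0 : ('i : R[i]) != 0.
    by apply/eqP => /(congr1 (@complex.Im R)) /= /eqP; rewrite oner_eq0.
  by rewrite (negbTE two0) (negbTE i0) /= => /eqP.
pose q := fun x => complex.Re (delta g x) ^+ 2 + complex.Im (delta g x) ^+ 2.
have cq : forall x, cmod (delta g x) ^+ 2 = q x.
  by move=> x; rewrite /cmod sqr_sqrtr // addr_ge0 // sqr_ge0.
have mq : measurable_fun setT q.
  have [m1 m2] := dm g mg.
  by apply: measurable_realfun.measurable_funD;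
    apply: measurable_realfun.measurable_funX.
pose S := fun k : nat => [set x | (k.+1%:R^-1 : R) ^+ 2 <= q x].
have mS : forall k, measurable (S k).
  move=> k; have -> : S k = setT `&` q @^-1` `[(k.+1%:R^-1 : R) ^+ 2, +oo[.
    by apply/seteqP; split => x /=; rewrite in_itv /= andbT; [move=> ?; split|case].
  by apply: mq => //; exact: measurable_itv.
have [k Sk] : exists k, mu (S k) <> 0%E.
  apply: contrapT => Hno; apply: ndg.
  have N0 : forall k, mu (S k) = 0%E.
    by move=> k; apply: contrapT => ne; apply: Hno; exists k.
  have : mu.-negligible (\bigcup_k S k).
    by apply: negligible_bigcup => k; exists (S k); split.
  apply: negligibleS => x /= dx.
  have cp : 0 < cmod (delta g x).
    by rewrite lt0r cmod_ge0 andbT cmod_eq0; apply/eqP.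
  have ip : 0 <= (cmod (delta g x))^-1 by rewrite invr_ge0 ltW.
  have bp := archi_boundP ip.
  exists (Num.bound (cmod (delta g x))^-1) => //; rewrite /S /= -cq.
  set b := Num.bound _.
  rewrite ler_sqr ?nnegrE ?cmod_ge0 ?invr_ge0 ?ler0n //.
  rewrite -[cmod _]invrK ltW // ltf_pV2 ?posrE ?ltr0n ?invr_gt0 //.
  by rewrite (lt_trans bp) // ltr_nat.
exists (fun n => G (n * k.+1)%N), (S k); split; last split => //; last split => //.
  move=> n n0; split; first exact: mG.
  by apply: aeW => x; rewrite /G cmodX cg1 expr1n.
move=> n n0.
have m0 : (0 < n * k.+1)%N by rewrite muln_gt0 n0.
have := dG (n * k.+1).-1; rewrite prednK //.
apply: filterS => x ->.
rewrite !cmodM cmodX cg1 expr1n mulr1.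
have -> : cmod ((n * k.+1)%:R : R[i]) = (n * k.+1)%:R.
  by apply: RC_inj; rewrite -cmodE normr_nat rmorph_nat.
rewrite indicE; case: (pselect (S k x)) => Sx; last first.
  by rewrite memNset // mulr0 mulr_ge0 ?ler0n ?cmod_ge0.
rewrite mem_set // mulr1.
have cx : (k.+1%:R^-1 : R) <= cmod (delta g x).
  by rewrite -ler_sqr ?nnegrE ?cmod_ge0 ?invr_ge0 ?ler0n // cq.
rewrite natrM -mulrA -[leLHS]mulr1 ler_wpM2l ?ler0n //.
by rewrite -ler_pdivrMl ?ltr0n // mulr1.
Qed.

Theorem lemma3p3 (d : measure_display) (T : measurableType d) (R : realType)
  (mu : {measure set T -> \bar R}) (delta : (T -> R[i]) -> (T -> R[i])) :
  direct_sum_property mu ->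
  derivation mu delta ->
  nonzero_derivation mu delta ->
  exists (lam : nat -> T -> R[i]) (A : set T),
    (forall n, (0 < n)%N ->
       cmeas (lam n) /\ {ae mu, forall x, cmod (lam n x) <= 1}) /\
    (* pi = class of the indicator of A is a nonzero idempotent of L^0 *)
    measurable A /\ mu A <> 0%E /\
    (* |delta(lam n)| >= n * pi  a.e., for all n >= 1 *)
    (forall n, (0 < n)%N ->
       {ae mu, forall x, n%:R * \1_A x <= cmod (delta (lam n) x)}).
Proof.
move=> _ Hd [f [[mf1 mf2] nzf]].
have Hd' := Hd; case: Hd' => _ _ dlin _.
have mr : cmeas (fun x => (complex.Re (f x))%:C) by apply: cmeas_RC.
have mi : cmeas (fun x => (complex.Im (f x))%:C) by apply: cmeas_RC.
case: (pselect (aeeq mu (delta (fun x => (complex.Re (f x))%:C)) (fun _ => 0))) => hr;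
  last exact: main_real Hd mf1 hr.
case: (pselect (aeeq mu (delta (fun x => (complex.Im (f x))%:C)) (fun _ => 0))) => hi;
  last exact: main_real Hd mf2 hi.
exfalso; apply: nzf.
have := dlin 1 'i _ _ mr mi.
have -> : (fun x => 1 * (complex.Re (f x))%:C + 'i * (complex.Im (f x))%:C) = f.
  by apply: funext => x; rewrite mul1r -complexE.
move=> H; apply: filterS3 H hr hi => x -> -> ->.
by rewrite !mulr0 addr0.
Qed.
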